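(* Let $n\in\mathbb{N}$, $i\in\{1,\ldots,n\}$ and $x\in\mathcal{X}^n$. Then \[ x_i \ge \frac{1}{(n-i+1)(s_i-1)}, \] with equality if and only if $x = \bar x(i)$.
   Context: The Sylvester sequence: $s_1 = 2$, $s_i = \prod_{j=1}^{i-1} s_j + 1$ for $i\ge2$. $\mathcal{X}^n$ is the set of $x\in\mathbb{R}^n$ with $x_1+\cdots+x_n = 1$, $1 \ge x_1 \ge \cdots \ge x_n \ge 0$, and $x_1\cdots x_j \le x_{j+1}+\cdots+x_n$ for all $j\in\{1,\ldots,n-1\}$. For $l\in\{1,\ldots,n\}$, $\bar x(l) := \big(\frac{1}{s_1},\ldots,\frac{1}{s_{l-1}}, \frac{1}{(n-l+1)(s_l-1)},\ldots,\frac{1}{(n-l+1)(s_l-1)}\big)\in\mathbb{R}^n$ (last value repeated $n-l+1$ times). *)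

(* Defs.v *)
From HB Require Import structures.
From mathcomp Require Import all_boot all_order all_algebra.
Set Implicit Arguments. Unset Strict Implicit. Unset Printing Implicit Defensive.
Import Order.TTheory GRing.Theory Num.Theory.

(* Sylvester sequence, 1-based, literally as in the paper:
   s_1 = 2, s_i = (\prod_{j=1}^{i-1} s_j) + 1 for i >= 2.
   sylv_list k = [:: s_1; ...; s_k] is built by iterating the defining rule;
   sylv i := s_i (and sylv 0 is an unused junk value). *)
Fixpoint sylv_list (k : nat) : seq nat :=
  match k with
  | 0 => [::]
  | k'.+1 => let l := sylv_list k' in
             rcons l (if k' is 0 then 2 else (\prod_(s <- l) s).+1)
  end.

Definition sylv (i : nat) : nat := nth 0 (sylv_list i) i.-1.

Example sylv_check : [:: sylv 1; sylv 2; sylv 3; sylv 4] = [:: 2; 3; 7; 43].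
Proof. by rewrite /sylv /= !big_cons big_nil. Qed.

Local Open Scope ring_scope.

(* Vectors x in R^n are functions 'I_n -> R; the paper's coordinate x_k
   (1 <= k <= n) is x (k-1) here. *)

Definition inX (R : realFieldType) (n : nat) (x : 'I_n -> R) : Prop :=
  [/\ \sum_(k < n) x k = 1,
      (forall k : 'I_n, x k <= 1),
      (forall k : 'I_n, 0 <= x k),
      (forall k l : 'I_n, (k <= l)%N -> x l <= x k) &
      (forall j : nat, (1 <= j <= n.-1)%N ->
         \prod_(k < n | (k < j)%N) x k <= \sum_(k < n | (j <= k)%N) x k)].

(* xbar(l) for 1 <= l <= n, coordinate k (0-based, paper index k+1). *)
Definition xbar (R : realFieldType) (n l : nat) (k : 'I_n) : R :=
  if (k.+1 < l)%N then ((sylv k.+1)%:R)^-1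
  else (((n - l + 1)%N%:R) * (((sylv l)%:R) - 1))^-1.

(* Main.v *)
Require Import Defs.
From HB Require Import structures.
From mathcomp Require Import all_boot all_order all_algebra.
From mathcomp Require Import ring lra zify.
From Stdlib Require Import FunctionalExtensionality.
Import Order.TTheory GRing.Theory Num.Theory.

Set Implicit Arguments. Unset Strict Implicit. Unset Printing Implicit Defensive.


Lemma size_sylv_list j : size (sylv_list j) = j.
Proof. by elim: j => //= j IH; rewrite size_rcons IH. Qed.

Lemma sylv_list_map j : sylv_list j = map (fun l => sylv l.+1) (iota 0 j).
Proof.
elim: j => // j IH.
rewrite -addn1 iotaD map_cat /= addn1 add0n cats1 -IH.
rewrite [in RHS]/sylv /= nth_rcons size_sylv_list ltnn eqxx.
by rewrite /=.
Qed.

Definition q j := \prod_(0 <= l < j) sylv l.+1.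

Lemma sylvE j : sylv j.+1 = (q j).+1.
Proof.
rewrite /sylv /= nth_rcons size_sylv_list ltnn eqxx.
case: j => [|j]; first by rewrite /q big_geq.
by rewrite sylv_list_map big_map /q /index_iota subn0.
Qed.

Lemma q_pos j : (0 < q j)%N.
Proof.
elim: j => [|j IH]; first by rewrite /q big_geq.
by rewrite /q big_nat_recr //= -/(q j) sylvE muln_gt0 IH.
Qed.

Lemma qS j : q j.+1 = (q j * (q j).+1)%N.
Proof. by rewrite /q big_nat_recr //= -/(q j) sylvE. Qed.


Local Open Scope ring_scope.

Section S.
Variable R : realFieldType.

Lemma abel k (d w : nat -> R) :
  (forall l, (l.+1 < k)%N -> w l <= w l.+1) ->
  ((0 < k)%N -> 0 <= w 0) ->
  (forall m, (m <= k)%N -> 0 <= \sum_(m <= l < k) d l) ->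
  0 <= \sum_(0 <= l < k) d l * w l.
Proof.
elim: k d w => [|k IH] d w Hm Hw HD; first by rewrite big_geq.
have E : \sum_(0 <= l < k.+1) d l * w l =
   w 0 * \sum_(0 <= l < k.+1) d l + \sum_(0 <= l < k) d l.+1 * (w l.+1 - w 0).
  rewrite !big_nat_recl // mulrDr mulrC -addrA; congr (_ + _).
  rewrite mulr_sumr -big_split /=; apply: eq_bigr => l _; ring.
rewrite E; apply: addr_ge0; first by apply: mulr_ge0; [exact: Hw | exact: HD].
apply: (IH (fun l => d l.+1) (fun l => w l.+1 - w 0)).
- by move=> l Hl /=; rewrite lerD2r; apply: Hm.
- by move=> Hk /=; rewrite subr_ge0; apply: Hm.
- move=> m Hmk; have := HD m.+1 Hmk; by rewrite big_add1 /=.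
Qed.

Definition y l : R := ((q l).+1%:R)^-1.
Definition c j : R := ((q j)%:R)^-1.

Lemma q_neq0 j : (q j)%:R != 0 :> R.
Proof. by rewrite pnatr_eq0 -lt0n q_pos. Qed.

Lemma y_pos l : 0 < y l.
Proof. by rewrite /y invr_gt0 ltr0Sn. Qed.

Lemma c_pos l : 0 < c l.
Proof. by rewrite /c invr_gt0 ltr0n q_pos. Qed.

Lemma prod_y j : \prod_(0 <= l < j) y l = c j.
Proof.
elim: j => [|j IH]; first by rewrite big_geq // /c /q big_geq // invr1.
rewrite big_nat_recr //= IH /c /y qS natrM -invfM.
by rewrite -natrM.
Qed.

Lemma sigmaE j : \sum_(0 <= l < j) y l = 1 - c j.
Proof.
elim: j => [|j IH]; first by rewrite big_geq // /c /q big_geq // invr1 subrr.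
rewrite big_nat_recr //= IH /c /y qS natrM.
have := q_neq0 j; set t := (q j)%:R => Ht.
have Ht1 : (q j).+1%:R != 0 :> R by rewrite pnatr_eq0.
have E : ((q j).+1)%:R = t + 1 :> R by rewrite /t natr1.
rewrite E in Ht1 *.
by field; rewrite Ht Ht1.
Qed.

End S.


Local Open Scope ring_scope.

Section S.
Variable R : realFieldType.

Lemma keyK k (a b : nat -> R) :
 (forall l, (l < k)%N -> 0 < a l) ->
 (forall l, (l.+1 < k)%N -> a l.+1 <= a l) ->
 (forall l, (l < k)%N -> 0 <= b l) ->
 (forall m, (m <= k)%N -> \sum_(m <= l < k) b l <= \sum_(m <= l < k) a l) ->
 \prod_(0 <= l < k) b l <= \prod_(0 <= l < k) a l /\
 (\prod_(0 <= l < k) b l = \prod_(0 <= l < k) a l -> forall l, (l < k)%N -> a l = b l).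
Proof.
move=> Ha Hm Hb HD.
have Hab : 0 <= \sum_(0 <= l < k) (a l - b l) * (a l)^-1.
  apply: abel.
  - move=> l Hl; rewrite lef_pV2 ?posrE; [apply: Hm => // | apply: Ha; lia | apply: Ha; lia].
  - by move=> Hk; rewrite invr_ge0 ltW // Ha.
  - by move=> m Hmk; rewrite sumrB subr_ge0 HD.
pose r l := b l / a l.
have Hr : \sum_(0 <= l < k) r l = k%:R - \sum_(0 <= l < k) (a l - b l) * (a l)^-1.
  have Hk1 : k%:R = \sum_(0 <= l < k) (1:R) by rewrite sumr_const_nat subn0.
  rewrite Hk1 -sumrB; apply: eq_big_nat => l /andP[_ Hl].
  rewrite /r mulrBl divff //; last by rewrite gt_eqF // Ha.
  by rewrite opprB addrC subrK.
have Hsum : \sum_(0 <= l < k) r l <= k%:R by rewrite Hr lerBlDr lerDl.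
have Hr0 : forall l, (l < k)%N -> 0 <= r l.
  by move=> l Hl; rewrite /r divr_ge0 // ?Hb // ltW // Ha.
have Hpa : 0 < \prod_(0 <= l < k) a l.
  by rewrite big_nat_cond; apply: prodr_gt0 => l /andP[/andP[_ Hl] _]; apply: Ha.
have Hpr : \prod_(0 <= l < k) r l = \prod_(0 <= l < k) b l / \prod_(0 <= l < k) a l.
  by rewrite /r prodf_div.
case: (posnP k) => [->|Hk].
  by split=> [|_ l]; rewrite ?big_geq.
have AGM := @leif_AGM R 'I_k predT (fun i => r (val i)) (fun i _ => Hr0 _ (ltn_ord i)).
rewrite /= !card_ord in AGM.
have E1 : \prod_(i in predT) r (@nat_of_ord k i) = \prod_(0 <= l < k) r l by rewrite big_mkord.
have E2 : \sum_(i in predT) r (@nat_of_ord k i) = \sum_(0 <= l < k) r l by rewrite big_mkord.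
rewrite E1 E2 in AGM.
set mu := (\sum_(0 <= l < k) r l) / k%:R in AGM.
have Hkr : 0 < k%:R :> R by rewrite ltr0n.
have mu0 : 0 <= mu by rewrite divr_ge0 // ?ler0n // big_nat_cond sumr_ge0 // => l /andP[/andP[_ Hl] _]; apply: Hr0.
have mu1 : mu <= 1 by rewrite ler_pdivrMr // mul1r.
have mun1 : mu ^+ k <= 1 by apply: exprn_ile1.
split.
  have := le_trans (leif_le AGM) mun1.
  by rewrite Hpr ler_pdivrMr // mul1r.
move=> Heq l Hl.
have Hpr1 : \prod_(0 <= l < k) r l = 1 by rewrite Hpr Heq divff // gt_eqF.
have Hmuk : mu ^+ k = 1.
  apply/eqP; rewrite eq_le mun1 /=; rewrite -Hpr1; exact: (leif_le AGM).
have Hall : [forall i in predT, forall j in predT, r (@nat_of_ord k i) == r (@nat_of_ord k j)].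
  case: AGM => _; rewrite Hpr1 Hmuk eqxx; by move <-.
move/forall_inP: Hall => Hall.
have Hmu1 : mu = 1 by apply/eqP; rewrite -(pexpr_eq1 Hk mu0) Hmuk.
have Hrl : r l = mu.
  rewrite /mu; apply: (mulIf (lt0r_neq0 Hkr)); rewrite divfK ?lt0r_neq0 //.
  rewrite big_mkord.
  have -> : \sum_(i < k) r i = \sum_(i < k) r l.
    apply: eq_bigr => i _.
    have := Hall i isT => /forall_inP /(_ (Ordinal Hl) isT) /eqP ->; done.
  by rewrite sumr_const card_ord mulr_natr.
move: Hrl; rewrite Hmu1 /r => H.
have Hal : a l != 0 by rewrite gt_eqF ?Ha.
by rewrite -[b l](divfK Hal) H mul1r.
Qed.

End S.


Local Open Scope ring_scope.

Section S.
Variable R : realFieldType.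
Notation y := (@y R).
Notation c := (@c R).

Lemma dec_chain k (a : nat -> R) :
  (forall l, (l.+1 < k)%N -> a l.+1 <= a l) ->
  forall l m, (l <= m)%N -> (m < k)%N -> a m <= a l.
Proof.
move=> Hd l m Hlm; elim: m Hlm => [|m IH] Hlm Hmk.
  by have -> : l = 0%N by lia.
case: (ltnP l m.+1) => H; last by have -> : l = m.+1 by lia.
apply: le_trans (Hd m Hmk) (IH _ _); lia.
Qed.

Lemma step k (a : nat -> R) :
  (forall l, (l < k)%N -> 0 <= a l) ->
  (forall l, (l.+1 < k)%N -> a l.+1 <= a l) ->
  (\prod_(0 <= l < k) a l <= 1 - \sum_(0 <= l < k) a l) ->
  (forall j, (j < k)%N -> \sum_(0 <= l < j) a l <= \sum_(0 <= l < j) y l) ->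
  \sum_(0 <= l < k) y l <= \sum_(0 <= l < k) a l ->
  forall l, (l < k)%N -> a l = y l.
Proof.
move=> H0 Hd Hc Hj Hs.
case: k H0 Hd Hc Hj Hs => [|k] H0 Hd Hc Hj Hs; first by [].
have Hlast : y k <= a k.
  move: Hs; rewrite !big_nat_recr //= => Hs.
  have := Hj k (ltnSn k); lra.
have Hpos : forall l, (l < k.+1)%N -> 0 < a l.
  move=> l Hl; apply: lt_le_trans (y_pos R k) (le_trans Hlast _).
  apply: (dec_chain Hd); lia.
have Htail : forall m, (m <= k.+1)%N ->
    \sum_(m <= l < k.+1) y l <= \sum_(m <= l < k.+1) a l.
  move=> m Hm; case: (ltnP m k.+1) => Hmk; last by rewrite !big_geq.
  have := Hj m Hmk; move: Hs.
  rewrite (big_cat_nat (leq0n m) Hm) [X in _ <= X](big_cat_nat (leq0n m) Hm) /=.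
  lra.
have [K1 K2] := keyK Hpos Hd (fun l _ => ltW (y_pos R l)) Htail.
move=> l Hl; apply: K2 => //.
apply/eqP; rewrite eq_le K1 /= prod_y.
apply: (le_trans Hc); have := sigmaE R k.+1; rewrite -/(y _) -/(c _); lra.
Qed.

Lemma ineq k (a : nat -> R) :
  (forall l, (l < k)%N -> 0 <= a l) ->
  (forall l, (l.+1 < k)%N -> a l.+1 <= a l) ->
  (forall j, (j <= k)%N -> \prod_(0 <= l < j) a l <= 1 - \sum_(0 <= l < j) a l) ->
  forall j, (j <= k)%N -> \sum_(0 <= l < j) a l <= \sum_(0 <= l < j) y l.
Proof.
move=> H0 Hd Hc; elim/ltn_ind => j IH Hjk.
case: (leP (\sum_(0 <= l < j) y l) (\sum_(0 <= l < j) a l)) => Hs; last by apply: ltW.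
have := @step j a (fun l Hl => H0 l (leq_trans Hl Hjk))
  (fun l Hl => Hd l (leq_trans Hl Hjk)) (Hc j Hjk)
  (fun j' Hj' => IH j' Hj' (ltnW (leq_trans Hj' Hjk))) Hs => E.
by rewrite (eq_big_nat _ _ (fun l Hl => E l (proj2 (andP Hl)))).
Qed.

End S.

Unset Implicit Arguments. Set Strict Implicit. Set Printing Implicit Defensive.
Local Open Scope ring_scope.

Theorem mainTheorem15 (R : realFieldType) (n : nat) (i : 'I_n) (x : 'I_n -> R) :
  inX x ->
  (((n - i.+1 + 1)%N%:R) * (((sylv i.+1)%:R) - 1))^-1 <= x i /\
  (x i = (((n - i.+1 + 1)%N%:R) * (((sylv i.+1)%:R) - 1))^-1
     <-> x = @xbar R n i.+1).
Proof.
case=> Hsum H1 H0 Hmono Hprod.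
pose a l := match @insub nat (fun l => l < n)%N 'I_n l with Some j => x j | None => 0 end.
have aO : forall l (Hl : (l < n)%N), a l = x (Ordinal Hl).
  by move=> l Hl; rewrite /a (insubT (fun l => l < n)%N Hl).
have aV : forall j : 'I_n, a j = x j.
  by move=> j; rewrite (aO j (ltn_ord j)); congr x; apply: val_inj.
have Ssum : forall j, (j <= n)%N -> \sum_(k < n | (k < j)%N) x k = \sum_(0 <= l < j) a l.
  move=> j Hj; rewrite big_mkord (big_ord_widen _ _ Hj).
  by apply: eq_bigr => k _; rewrite aV.
have Sprod : forall j, (j <= n)%N -> \prod_(k < n | (k < j)%N) x k = \prod_(0 <= l < j) a l.
  move=> j Hj; rewrite big_mkord (big_ord_widen _ _ Hj).
  by apply: eq_bigr => k _; rewrite aV.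
have Stail : forall j, \sum_(k < n | (j <= k)%N) x k = 1 - \sum_(k < n | (k < j)%N) x k.
  move=> j; rewrite -Hsum (bigID (fun k : 'I_n => (k < j)%N) predT) /=.
  rewrite addrC addrK; apply: eq_bigl => k; by rewrite -leqNgt.
have Htot : \sum_(0 <= l < n) a l = 1.
  by rewrite -Hsum -(Ssum n (leqnn n)); apply: eq_bigl => k; rewrite ltn_ord.
set p := nat_of_ord i.
have Hpn : (p < n)%N by apply: ltn_ord.
have Ha0 : forall l, (l < p)%N -> 0 <= a l.
  by move=> l Hl; rewrite (aO l (ltn_trans Hl Hpn)).
have Had : forall l, (l.+1 < n)%N -> a l.+1 <= a l.
  move=> l Hl; rewrite (aO _ Hl) (aO l (ltnW Hl)); apply: Hmono => /=; lia.
have Hc : forall j, (j <= p)%N -> \prod_(0 <= l < j) a l <= 1 - \sum_(0 <= l < j) a l.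
  move=> j Hj; case: (posnP j) => [->|Hj0]; first by rewrite !big_geq // subr0.
  have Hjn : (j <= n)%N by lia.
  rewrite -(Sprod j Hjn) -(Ssum j Hjn) -Stail; apply: Hprod; lia.
have Hineq := @ineq R p a Ha0 (fun l Hl => Had l (ltn_trans Hl Hpn)) Hc.
have Sp := Hineq p (leqnn p).
rewrite sigmaE in Sp.
have Tsplit : \sum_(0 <= l < n) a l = \sum_(0 <= l < p) a l + \sum_(p <= l < n) a l.
  by rewrite (big_cat_nat (leq0n p) (ltnW Hpn)).
have HT : c R p <= \sum_(p <= l < n) a l by move: Tsplit; rewrite Htot; lra.
have Hle : forall l, (p <= l < n)%N -> a l <= a p.
  move=> l /andP[H1l H2l]; rewrite (aO _ H2l) (aO _ Hpn); apply: Hmono => /=; lia.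
have HTle : \sum_(p <= l < n) a l <= (n - p)%:R * a p.
  have -> : (n - p)%:R * a p = \sum_(p <= l < n) a p by rewrite sumr_const_nat mulr_natl.
  rewrite big_nat_cond [X in _ <= X]big_nat_cond.
  by apply: ler_sum => l /andP[Hl _]; apply: Hle.
have Hnp : 0 < (n - p)%:R :> R by rewrite ltr0n subn_gt0.
have Hbound : (((n - i.+1 + 1)%N%:R) * (((sylv i.+1)%:R) - 1))^-1 = c R p / (n - p)%:R :> R.
  rewrite sylvE -/p /c -natr1 addrK.
  have -> : (n - p.+1 + 1)%N = (n - p)%N by lia.
  by rewrite invfM mulrC.
have xa : x i = a p by rewrite aV.
rewrite Hbound xa.
have Hineq2 : c R p / (n - p)%:R <= a p.
  by rewrite ler_pdivrMr // mulrC; apply: le_trans HT HTle.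
split => //; split.
- move=> Heq.
  have HT2 : \sum_(p <= l < n) a l = c R p.
    apply/eqP; rewrite eq_le HT andbT; apply: (le_trans HTle).
    by rewrite Heq mulrC divfK // gt_eqF.
  have Hfirst : forall l, (l < p)%N -> a l = y R l.
    apply: (@step R p a Ha0 (fun l Hl => Had l (ltn_trans Hl Hpn)) (Hc p (leqnn p))).
    + by move=> j Hj; apply: Hineq; apply: ltnW.
    + rewrite sigmaE; move: Tsplit; rewrite Htot HT2; lra.
  have Hrest : forall l, (p <= l < n)%N -> a l = a p.
    have Hz : \sum_(p <= l < n) (a p - a l) = 0.
      rewrite sumrB sumr_const_nat -mulr_natl HT2 Heq mulrC divfK ?subrr // gt_eqF //.
    move: Hz; rewrite big_geq_mkord => Hz.
    have Hz2 := psumr_eq0P (P := fun k : 'I_n => (p <= k)%N) (F := fun k : 'I_n => a p - a k).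
    have Hnn : forall k : 'I_n, (p <= k)%N -> 0 <= a p - a k.
      by move=> k Hk /=; rewrite subr_ge0; apply: Hle; rewrite Hk ltn_ord.
    move=> l /andP[Hl1 Hl2].
    have := Hz2 Hnn Hz (Ordinal Hl2) Hl1.
    by move=> /eqP; rewrite subr_eq0 => /eqP ->.
  apply: functional_extensionality => k.
  rewrite /xbar -aV.
  case: ltnP => Hk.
  + rewrite Hfirst; last by lia.
    by rewrite /y sylvE.
  + rewrite Hbound -Heq; apply: Hrest; rewrite ltn_ord andbT; lia.
- move=> Hx; rewrite -xa Hx /xbar ltnn -Hbound; done.
Qed.
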